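(* Let $G$ be a finite, simple, connected graph and let $e \in E(G)$ be an edge that is not a cut edge of $G$. Then $$\chi_{dd}(G)-1 \leq \chi_{dd}(G-e) \leq \chi_{dd}(G)+2,$$ where $G-e$ is the graph obtained from $G$ by removing the edge $e$ (keeping all vertices).
   Context: All graphs are finite, undirected and simple. For a vertex $w$, $N(w)$ is its open neighborhood and $N[w]=N(w)\cup\{w\}$ its closed neighborhood. A vertex $w$ dominates a set $S$ of vertices if $S \subseteq N[w]$. A domination coloring of a graph $H$ is a proper vertex coloring of $H$ (adjacent vertices receive different colors; a color class is the set of all vertices receiving a given color) such that every vertex of $H$ dominates at least one color class (possibly its own class), and every color class is dominated by at least one vertex of $H$. The domination chromatic number $\chi_{dd}(H)$ is the minimum number of color classes in a domination coloring of $H$. *)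

(* Defs.v *)
(* A finite simple graph is a symmetric irreflexive relation
   adj : rel T on a finType T (vertex set = T). *)
From mathcomp Require Import all_boot.
Set Implicit Arguments. Unset Strict Implicit. Unset Printing Implicit Defensive.

Section DomColoring.
Variable T : finType.

Definition cnbhd (adj : rel T) (w : T) : {set T} := [set x | (x == w) || adj w x].

Definition dominates (adj : rel T) (w : T) (S : {set T}) : bool := S \subset cnbhd adj w.

Definition color_class (K : finType) (c : T -> K) (i : K) : {set T} := [set x | c x == i].

Definition used_colors (K : finType) (c : T -> K) : {set K} := [set c x | x in T].

Definition proper_coloring (adj : rel T) (K : finType) (c : T -> K) : bool :=
  [forall x, forall y, adj x y ==> (c x != c y)].

Definition domination_coloring (adj : rel T) (K : finType) (c : T -> K) : bool :=
  [&& proper_coloring adj c,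
      [forall w, exists i in used_colors c, dominates adj w (color_class c i)] &
      [forall i in used_colors c, exists w, dominates adj w (color_class c i)]].

(* Colors can be taken in 'I_#|T| without loss of generality (relabeling);
   the discrete coloring (all vertices distinct) is always a domination
   coloring, so the default value #|T| is attained anyway. *)
Definition chi_dd (adj : rel T) : nat :=
  \big[minn/#|T|]_(c : {ffun T -> 'I_#|T|} | domination_coloring adj c)
     #|used_colors c|.

Definition remove_edge (adj : rel T) (u v : T) : rel T :=
  fun x y => adj x y && ~~ (((x == u) && (y == v)) || ((x == v) && (y == u))).

Definition simple_graph (adj : rel T) : Prop := symmetric adj /\ irreflexive adj.

Definition connected_graph (adj : rel T) : Prop := forall x y, connect adj x y.

(* uv is a cut edge: its removal increases the number of components, i.e. some
   two vertices connected in G are disconnected in G - uv *)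
Definition cut_edge (adj : rel T) (u v : T) : Prop :=
  exists x y, connect adj x y /\ ~~ connect (remove_edge adj u v) x y.

End DomColoring.

(* Main.v *)
Require Import Defs.
From mathcomp Require Import all_boot.
Set Implicit Arguments. Unset Strict Implicit. Unset Printing Implicit Defensive.

Section S.
Variable T : finType.
Implicit Types adj : rel T.

Lemma domP adj (K : finType) (c : T -> K) :
  reflect [/\ forall x y, adj x y -> c x != c y,
              forall w, exists x, dominates adj w (color_class c (c x)) &
              forall x, exists w, dominates adj w (color_class c (c x))]
          (domination_coloring adj c).
Proof.
apply: (iffP and3P) => [[/forallP pr /forallP d1 /forallP d2]|[pr d1 d2]]; split.
- move=> x y; exact: (implyP (forallP (pr x) y)).
- move=> w; case/existsP: (d1 w) => i /andP[/imsetP[x _ ->] H]; by exists x.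
- move=> x; have /existsP[w H] := implyP (d2 (c x)) (imset_f c (isT : x \in T)).
  by exists w.
- apply/forallP => x; apply/forallP => y; apply/implyP; exact: pr.
- apply/forallP => w; case: (d1 w) => x H; apply/existsP; exists (c x).
  by rewrite H andbT imset_f.
- apply/forallP => i; apply/implyP => /imsetP[x _ ->].
  by case: (d2 x) => w H; apply/existsP; exists w.
Qed.

Lemma ncolors (K : finType) (c : T -> K) :
  #|used_colors c| = #|[set color_class c (c x) | x in T]|.
Proof.
rewrite (imset_comp (color_class c) c) card_in_imset //.
move=> _ _ /imsetP[x _ ->] /imsetP[y _ ->] E.
have : x \in color_class c (c x) by rewrite inE.
by rewrite E inE => /eqP.
Qed.

Lemma transfer adj (K K' : finType) (c : T -> K) (d : T -> K') :
  (forall x y, (c x == c y) = (d x == d y)) ->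
  domination_coloring adj c = domination_coloring adj d /\
  #|used_colors c| = #|used_colors d|.
Proof.
move=> H.
have E : forall x, color_class c (c x) = color_class d (d x).
  by move=> x; apply/setP => y; rewrite !inE H.
split.
  apply/domP/domP => -[h1 h2 h3]; split.
  - by move=> x y /h1; rewrite H.
  - by move=> w; case: (h2 w) => x; exists x; rewrite -E.
  - by move=> x; case: (h3 x) => w; exists w; rewrite -E.
  - by move=> x y /h1; rewrite H.
  - by move=> w; case: (h2 w) => x; exists x; rewrite E.
  - by move=> x; case: (h3 x) => w; exists w; rewrite E.
rewrite (ncolors c) (ncolors d); apply: eq_card => S; apply/imsetP/imsetP => -[x _ ->]; exists x => //; by rewrite E.
Qed.

Lemma bigmin_leq (I : eqType) (r : seq I) (P : pred I) (F : I -> nat) x i :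
  i \in r -> P i -> \big[minn/x]_(j <- r | P j) F j <= F i.
Proof.
elim: r => //= a r IH; rewrite inE big_cons => /orP[/eqP <- -> | ir Pi].
  exact: geq_minl.
case: (P a); last exact: IH.
exact: leq_trans (geq_minr _ _) (IH ir Pi).
Qed.

Lemma chi_dd_le adj (K : finType) (c : T -> K) :
  domination_coloring adj c -> chi_dd adj <= #|used_colors c|.
Proof.
move=> dc.
pose r x := odflt x [pick y | c y == c x].
have rP x : c (r x) = c x.
  rewrite /r; case: pickP => [y /eqP //|/(_ x)]; by rewrite eqxx.
have r_eq x y : c x = c y -> r x = r y.
  move=> H; rewrite /r H; case: pickP => // H'.
  by have := H' y; rewrite eqxx.
pose c' : {ffun T -> 'I_#|T|} := [ffun x => enum_rank (r x)].
have Hc x y : (c x == c y) = (c' x == c' y).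
  rewrite !ffunE (inj_eq enum_rank_inj); apply/eqP/eqP.
    exact: r_eq.
  by move=> H; rewrite -rP H rP.
have [D C] := transfer adj Hc.
rewrite C; rewrite D in dc.
have := @bigmin_leq _ (index_enum {ffun T -> 'I_#|T|}) (fun c => domination_coloring adj c)
  (fun c => #|used_colors c|) #|T| c' (mem_index_enum _) dc.
by [].
Qed.

Lemma chi_dd_leT adj : chi_dd adj <= #|T|.
Proof.
rewrite /chi_dd; elim/big_ind: _ => // [m n Hm _|c _].
  exact: leq_trans (geq_minl _ _) Hm.
by rewrite -[X in _ <= X]card_ord max_card.
Qed.

Lemma chi_dd_cases adj : chi_dd adj = #|T| \/
  exists c : {ffun T -> 'I_#|T|}, domination_coloring adj c /\ chi_dd adj = #|used_colors c|.
Proof.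
rewrite /chi_dd; elim/big_ind: _ => [|m n Hm Hn|c dc]; first by left.
  by case: (leqP m n).
by right; exists c.
Qed.

End S.

Section G.
Variables (T : finType) (adj : rel T) (u v : T).
Hypotheses (sym : symmetric adj) (irr : irreflexive adj) (auv : adj u v).

Let H := remove_edge adj u v.

Lemma uv_neq : u != v.
Proof. by apply/eqP => E; move: auv; rewrite E irr. Qed.

Lemma remE1 w z : z != u -> z != v -> H w z = adj w z.
Proof.
move=> zu zv; rewrite /H /remove_edge (negbTE zu) (negbTE zv).
by rewrite !andbF /= andbT.
Qed.

Lemma remE2 w z : w != u -> w != v -> H w z = adj w z.
Proof.
move=> wu wv; rewrite /H /remove_edge (negbTE wu) (negbTE wv) /= andbT.
by [].
Qed.

Lemma sub_nb w z : z \in cnbhd H w -> z \in cnbhd adj w.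
Proof. by rewrite !inE /H /remove_edge => /orP[->|/andP[->]] //; rewrite orbT. Qed.

Lemma part1 (K : finType) (c : T -> K) :
  domination_coloring H c -> chi_dd adj <= #|used_colors c| + 1.
Proof.
move=> /domP [pr d1 d2].
pose d x := if x == u then None else Some (c x).
have dclass x : x != u -> color_class d (d x) = [set z | (z != u) && (c z == c x)].
  move=> xu; apply/setP => z; rewrite !inE /d (negbTE xu).
  by case: (z == u) => //=; rewrite (inj_eq (@Some_inj _)).
have uclass : color_class d (d u) = [set u].
  by apply/setP => z; rewrite !inE /d eqxx; case: (z == u).
apply: leq_trans (chi_dd_le (c := d) _) _.
  apply/domP; split.
  - move=> x y axy; rewrite /d.
    case: (eqVneq x u) => [xu|xu]; case: (eqVneq y u) => [yu|yu] //.
      by move: axy; rewrite xu yu irr.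
    rewrite (inj_eq (@Some_inj _)); apply: pr.
    rewrite /H /remove_edge axy (negbTE xu) (negbTE yu) /=.
    by rewrite andbF.
  - move=> w; case: (d1 w) => x0 dom0.
    case: (pickP (fun z => (z != u) && (c z == c x0))) => [y /andP[yu cy] | none].
      exists y; rewrite /dominates dclass //; apply/subsetP => z; rewrite inE => /andP[zu /eqP cz].
      by apply: sub_nb; apply: (subsetP dom0); rewrite inE cz.
    exists u; rewrite /dominates uclass sub1set; apply: sub_nb.
    have x0u : x0 = u by have := none x0; rewrite eqxx andbT => /negbFE/eqP.
    by rewrite -x0u; apply: (subsetP dom0); rewrite inE.
  - move=> x; case: (eqVneq x u) => [->|xu].
      by exists u; rewrite /dominates uclass sub1set inE eqxx.
    case: (d2 x) => w dw; exists w; rewrite /dominates dclass //.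
    apply/subsetP => z; rewrite inE => /andP[_ cz]; apply: sub_nb.
    by apply: (subsetP dw); rewrite inE.
apply: leq_trans (subset_leq_card (_ : used_colors d \subset None |: [set Some i | i in used_colors c])) _.
  apply/subsetP => _ /imsetP[x _ ->]; rewrite /d; case: (x == u); rewrite in_setU1 ?eqxx //=.
  by apply: imset_f; apply: imset_f.
rewrite cardsU1 card_imset; last exact: Some_inj.
by rewrite addnC leq_add2l leq_b1.
Qed.


Lemma part2 (K : finType) (c : T -> K) :
  domination_coloring adj c -> chi_dd H <= #|used_colors c| + 2.
Proof.
move=> /domP [pr d1 d2].
have nuv := uv_neq.
pose d x := if x == u then None else if x == v then Some None else Some (Some (c x)).
have dclass x : x != u -> x != v ->
    color_class d (d x) = [set z | [&& z != u, z != v & c z == c x]].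
  move=> xu xv; apply/setP => z; rewrite !inE /d (negbTE xu) (negbTE xv).
  by case: (z == u); case: (z == v) => //=; rewrite !(inj_eq (@Some_inj _)).
have uclass : color_class d (d u) = [set u].
  by apply/setP => z; rewrite !inE /d eqxx; case: (z == u); case: (z == v).
have vclass : color_class d (d v) = [set v].
  apply/setP => z; rewrite !inE /d (eq_sym v u) (negbTE nuv) eqxx.
  by case: (eqVneq z u) => [->|]; [rewrite (negbTE nuv)|case: (z == v)].
have nbE w : w != u -> w != v -> cnbhd H w = cnbhd adj w.
  by move=> wu wv; apply/setP => z; rewrite !inE remE2.
apply: leq_trans (chi_dd_le (c := d) _) _.
  apply/domP; split.
  - move=> x y; rewrite /H /remove_edge => /andP[axy np]; rewrite /d.
    case: (eqVneq x u) => [xu|xu]; case: (eqVneq y u) => [yu|yu];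
    case: (eqVneq x v) => [xv|xv]; case: (eqVneq y v) => [yv|yv] => //=;
    rewrite ?(inj_eq (@Some_inj _)) //.
    all: try (by move: nuv; rewrite -?xu -?yu ?xv ?yv eqxx).
    all: try (by move: axy; rewrite ?xu ?yu ?xv ?yv irr).
    all: try (by move: np; rewrite ?xu ?yu ?xv ?yv !eqxx ?orbT).
    all: try (exact: pr).
    all: idtac.
  - move=> w.
    case: (eqVneq w u) => [->|wu].
      by exists u; rewrite /dominates uclass sub1set !inE eqxx.
    case: (eqVneq w v) => [->|wv].
      by exists v; rewrite /dominates vclass sub1set !inE eqxx.
    rewrite /dominates nbE //.
    case: (d1 w) => x0 dom0.
    case: (pickP (fun z => [&& z != u, z != v & c z == c x0])) => [y /and3P[yu yv cy] | none].
      exists y; rewrite dclass //; apply/subsetP => z; rewrite inE => /and3P[_ _ /eqP cz].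
      by apply: (subsetP dom0); rewrite inE cz.
    have x0in : x0 \in cnbhd adj w by apply: (subsetP dom0); rewrite inE.
    case: (eqVneq x0 u) => [x0u|x0u].
      by exists u; rewrite uclass sub1set -x0u.
    case: (eqVneq x0 v) => [x0v|x0v].
      by exists v; rewrite vclass sub1set -x0v.
    by have := none x0; rewrite x0u x0v eqxx.
  - move=> x; case: (eqVneq x u) => [->|xu].
      by exists u; rewrite /dominates uclass sub1set inE eqxx.
    case: (eqVneq x v) => [->|xv].
      by exists v; rewrite /dominates vclass sub1set inE eqxx.
    case: (d2 x) => w dw; exists w; rewrite /dominates dclass //.
    apply/subsetP => z; rewrite inE => /and3P[zu zv cz].
    have : z \in cnbhd adj w by apply: (subsetP dw); rewrite inE.
    by rewrite !inE remE1.
apply: leq_trans (subset_leq_card (_ : used_colors d \subset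
   None |: (Some None |: [set Some (Some i) | i in used_colors c]))) _.
  apply/subsetP => _ /imsetP[x _ ->]; rewrite /d; case: (x == u); rewrite in_setU1 ?eqxx //=.
  case: (x == v); rewrite in_setU1 ?eqxx ?orbT //=.
  by apply: imset_f; apply: imset_f.
rewrite cardsU1 cardsU1 card_imset; last by move=> i j [].
by rewrite addnA addnC leq_add2l; apply: (leq_add (leq_b1 _) (leq_b1 _)).
Qed.

End G.


Theorem theorem2 (T : finType) (adj : rel T) (u v : T) :
  simple_graph adj -> connected_graph adj ->
  adj u v -> ~ cut_edge adj u v ->
  chi_dd adj <= chi_dd (remove_edge adj u v) + 1 /\
  chi_dd (remove_edge adj u v) <= chi_dd adj + 2.
Proof.
move=> [sym irr] _ auv _; split.
  case: (chi_dd_cases (remove_edge adj u v)) => [->|[c [dc ->]]].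
    exact: leq_trans (chi_dd_leT adj) (leq_addr _ _).
  exact: (@part1 T adj u v irr _ c dc).
case: (chi_dd_cases adj) => [->|[c [dc ->]]].
  exact: leq_trans (chi_dd_leT _) (leq_addr _ _).
exact: (@part2 T adj u v irr auv _ c dc).
Qed.
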